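(* Let $w$ be a word of length $k$ over an alphabet with $q \ge 2$ letters. Then $H_w(n) \ge (q-1)\, h_w(n-k-1)$ for all $n > k+1$.
   Context: Let $\Omega$ be a finite alphabet with $q\ge2$ letters; $w = w_k\dots w_1$ a word of length $k$. For an integer $n$, $h_w(n)$ is the number of strings of length $n$ over $\Omega$ whose last $k$ characters form $w$ and which contain $w$ as a block of $k$ consecutive characters nowhere else ($h_w(n) = 0$ for $n < k$, $h_w(k)=1$). $H_w(n) = q\,h_w(n-1) - h_w(n)$; for $n > k$ this equals the number of strings of length $n$ that begin with $w$, end with $w$, and contain $w$ as a block of $k$ consecutive characters nowhere else (and $H_w(k) = -1$, $H_w(n)=0$ for $n<k$). *)

(* Defs.v *)
From mathcomp Require Import all_boot all_order all_algebra.
Set Implicit Arguments. Unset Strict Implicit. Unset Printing Implicit Defensive.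
Import GRing.Theory Num.Theory.

(* Positions are 0-based; the block of length size w starting
   at position i of s is take (size w) (drop i s). *)
Definition occurs_at (Omega : eqType) (s w : seq Omega) (i : nat) : bool :=
  (i + size w <= size s) && (take (size w) (drop i s) == w).

(* h_w(n): number of strings of length n whose last k = size w characters
   form w, and which contain w as a block nowhere else. *)
Definition hw (Omega : finType) (w : seq Omega) (n : nat) : nat :=
  #|[set s : n.-tuple Omega |
      (size w <= n) &&
      [forall i : 'I_n.+1, occurs_at s w i == (val i == n - size w)]]|.

Definition Hw (Omega : finType) (w : seq Omega) (n : nat) : int :=
  (#|Omega|%:Z * (hw w n.-1)%:Z - (hw w n)%:Z)%R.

(* Main.v *)
Require Import Defs.
From mathcomp Require Import all_boot all_order all_algebra.
From mathcomp Require Import zify.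
Set Implicit Arguments. Unset Strict Implicit.


Definition per (T : Type) (f : nat -> T) p n := forall x, x + p < n -> f x = f (x + p).

Lemma per_mul (T : Type) (f : nat -> T) g n : per f g n ->
  forall m x, x + m * g < n -> f x = f (x + m * g).
Proof.
move=> H; elim=> [|m IH] x Hx; first by rewrite mul0n addn0.
rewrite (IH x); last by lia.
rewrite H; last by lia.
by congr f; rewrite mulSn; lia.
Qed.

Lemma fw_aux (T : Type) (f : nat -> T) N : forall p q n, p + q < N ->
  p + q - gcdn p q <= n -> per f p n -> per f q n -> per f (gcdn p q) n.
Proof.
elim: N => [|N IH] p q n //.
move=> HN.
wlog le_pq : p q HN / p <= q.
  move=> W; case: (leqP p q) => Hpq; first exact: W.
  move=> Hn Hp Hq; rewrite gcdnC; apply: (W q p); [lia|lia|rewrite gcdnC; lia|exact Hq|exact Hp].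
move=> Hn Hp Hq.
case: (posnP p) => [->|p0]; first by rewrite gcd0n.
case: (ltngtP p q) => [lt_pq||eq_pq]; last 2 first.
- lia.
- by rewrite -eq_pq gcdnn.
have Eg : gcdn p q = gcdn p (q - p).
  by rewrite -{1}(subnK (ltnW lt_pq)) gcdnDr.
set g := gcdn p q in Eg *.
have gp : g %| p by apply: dvdn_gcdl.
have gq : g %| q by apply: dvdn_gcdr.
have g0 : 0 < g by rewrite gcdn_gt0 p0.
have gle : g <= p by apply: dvdn_leq.
have gle2 : g <= q - p by apply: dvdn_leq; [lia| exact: dvdn_sub].
have IH' : per f g (n - p).
  rewrite Eg; apply: IH; [lia | rewrite -Eg; lia | |].
  - by move=> x Hx; apply: Hp; lia.
  - move=> x Hx; rewrite Hq; last by lia.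
    rewrite [in RHS]Hp; last by lia.
    by congr f; lia.
move=> x Hx.
case: (ltnP (x + g) (n - p)) => Hxg; first exact: IH'.
case: (ltnP x (n - p)) => Hx2.
- have Hy : f (x + g) = f (x + g - p).
    rewrite [in RHS]Hp; last by lia.
    by congr f; lia.
  rewrite Hy.
  have Hm := divnK gp.
  have := per_mul (m:=(p %/ g).-1) (x:=x + g - p) IH'.
  have -> : x + g - p + (p %/ g).-1 * g = x.
    have : 0 < p %/ g by rewrite divn_gt0 //.
    move: Hm; set a := p %/ g => Hm Ha.
    rewrite -Hm in Hxg Hx Hx2 *.
    nia.
  by move=> E; rewrite E.
- have E1 : f x = f (x - p) by rewrite [f (x - p)]Hp; [congr f; lia | lia].
  have E2 : f (x + g) = f (x - p + g) by rewrite [f (x - p + g)]Hp; [congr f; lia | lia].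
  rewrite E1 E2; apply: IH'; lia.
Qed.

Lemma occP (T : eqType) (x0 : T) (s w : seq T) i :
  reflect (i + size w <= size s /\ forall j, j < size w -> nth x0 s (i + j) = nth x0 w j)
          (occurs_at s w i).
Proof.
rewrite /occurs_at; apply: (iffP andP) => [[H /eqP E]|[H E]]; split => //.
- by move=> j Hj; rewrite -E nth_take // nth_drop.
- apply/eqP; apply: (eq_from_nth (x0:=x0)).
    by rewrite size_takel // size_drop; lia.
  move=> j; rewrite size_takel ?size_drop; last by lia.
  by move=> Hj; rewrite nth_take // nth_drop E.
Qed.

Lemma nthT1 (T : Type) (x0 c : T) w u p : p < size w -> nth x0 (w ++ c :: u) p = nth x0 w p.
Proof. by move=> H; rewrite nth_cat H. Qed.
Lemma nthT2 (T : Type) (x0 c : T) w u : nth x0 (w ++ c :: u) (size w) = c.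
Proof. by rewrite nth_cat ltnn subnn. Qed.
Lemma nthT3 (T : Type) (x0 c : T) w u r : nth x0 (w ++ c :: u) (size w + 1 + r) = nth x0 u r.
Proof. have H : (size w + 1 + r < size w) = false by lia. rewrite nth_cat H. by have -> : size w + 1 + r - size w = r.+1 by lia. Qed.

Lemma KL (T : eqType) (w u : seq T) c1 c2 i1 i2 :
  0 < i1 <= size w -> 0 < i2 <= size w -> i1 <= i2 ->
  occurs_at (w ++ c1 :: u) w i1 -> occurs_at (w ++ c2 :: u) w i2 -> c1 = c2.
Proof.
move=> /andP[i10 i1k] /andP[i20 i2k] le12 /(occP c1) [S1 E1] /(occP c1) [S2 E2].
clear S1 S2.
set k := size w in i1k i2k E1 E2.
have C1 : c1 = nth c1 w (k - i1).
  rewrite -E1; last by lia.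
  by rewrite (_ : i1 + (k - i1) = k) ?nthT2 //; lia.
have C2 : c2 = nth c1 w (k - i2).
  rewrite -E2; last by lia.
  by rewrite (_ : i2 + (k - i2) = k) ?nthT2 //; lia.
have P1 : forall j, j + i1 < k -> nth c1 w j = nth c1 w (j + i1).
  move=> j Hj; rewrite -E1; last by lia.
  rewrite nthT1; [by rewrite addnC | lia].
case: (ltngtP i1 i2) le12 => // [lt12 _|eq12 _]; last first.
  by rewrite C1 C2 eq12.
set d := i2 - i1.
set l2 := k - i2.
pose f x := nth c1 w (l2 + 1 + x).
have Pd : per f d (i2 - 1).
  move=> x Hx; rewrite /f.
  rewrite -E2; last by lia.
  rewrite -E1; last by lia.
  have -> : i2 + (l2 + 1 + x) = k + 1 + x by lia.
  have -> : i1 + (l2 + 1 + (x + d)) = k + 1 + x by lia.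
  by rewrite !nthT3.
have Pi : per f i1 (i2 - 1).
  move=> x Hx; rewrite /f P1; last by lia.
  by congr nth; lia.
have Pg : per f (gcdn d i1) (i2 - 1).
  apply: (fw_aux (N := (d + i1).+1)) => //.
  by have := gcdn_gt0 d i1; lia.
have F1 : c1 = f (d - 1) by rewrite C1 /f; congr nth; lia.
have F2 : c2 = f (i1 - 1) by rewrite C2 P1; [rewrite /f; congr nth; lia | lia].
set g := gcdn d i1 in Pg.
have gd : g %| d by apply: dvdn_gcdl.
have gi : g %| i1 by apply: dvdn_gcdr.
have key : forall a b, a <= b -> b < i2 - 1 -> g %| b - a -> f a = f b.
  move=> a b ab bl dv; have := per_mul (m := (b - a) %/ g) (x := a) Pg.
  rewrite divnK // (_ : a + (b - a) = b); last by lia.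
  by apply; lia.
rewrite F1 F2; case: (leqP d i1) => H.
  by apply: key; [lia | lia | rewrite (_ : i1 - 1 - (d - 1) = i1 - d); [exact: dvdn_sub | lia]].
symmetry; apply: key; [lia | lia | rewrite (_ : d - 1 - (i1 - 1) = d - i1); [exact: dvdn_sub | lia]].
Qed.

Definition Pg (T : eqType) (w s : seq T) n :=
  (size w <= n) && [forall i : 'I_n.+1, occurs_at s w i == (val i == n - size w)].

Lemma PP (T : eqType) (w s : seq T) n : size s = n ->
  reflect [/\ size w <= n, occurs_at s w (n - size w) &
              forall i, occurs_at s w i -> i = n - size w] (Pg w s n).
Proof.
move=> Hs; rewrite /Pg; apply: (iffP andP) => [[Hk /forallP H]|[Hk Ho Hu]].
- split => //.
  + have Hlt : n - size w < n.+1 by lia.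
    by have := H (Ordinal Hlt); rewrite /= eqxx => /eqP.
  + move=> i Hi; have Hlt : i < n.+1.
      by move: Hi; rewrite /occurs_at Hs => /andP[? _]; lia.
    by have := H (Ordinal Hlt); rewrite /= Hi => /eqP /esym /eqP.
- split => //; apply/forallP => -[i Hi]; apply/eqP => /=.
  case E: (occurs_at s w i); first by rewrite (Hu _ E) eqxx.
  by case: eqP => // Ei; rewrite -Ei E in Ho.
Qed.

Lemma occ_beh (T : eqType) (s w : seq T) i : 0 < size s ->
  occurs_at (behead s) w i = occurs_at s w i.+1.
Proof. by case: s => // x s _; rewrite /occurs_at /= addSn ltnS. Qed.

Lemma occ_cat (T : eqType) (s1 s2 w : seq T) i :
  occurs_at (s1 ++ s2) w (size s1 + i) = occurs_at s2 w i.
Proof.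
rewrite /occurs_at size_cat drop_cat.
have -> : (size s1 + i < size s1) = false by lia.
by rewrite (_ : size s1 + i - size s1 = i); [congr andb; lia | lia].
Qed.

Lemma occ0 (T : eqType) (s w : seq T) : occurs_at (w ++ s) w 0.
Proof. by rewrite /occurs_at drop0 take_size_cat // size_cat leq_addr eqxx. Qed.

Lemma L1 (T : eqType) (w t : seq T) n : size t = n.+1 -> size w < n.+1 ->
  Pg w t n.+1 -> Pg w (behead t) n.
Proof.
move=> Hs Hk /(PP w Hs) [_ Ho Hu].
have Hs' : size (behead t) = n by rewrite size_behead Hs.
apply/(PP w Hs'); split; first by lia.
- rewrite occ_beh ?Hs //; by rewrite (_ : (n - size w).+1 = n.+1 - size w); [|lia].
- move=> i; rewrite occ_beh ?Hs // => /Hu; lia.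
Qed.

Lemma L2 (T : eqType) (w t : seq T) n : size t = n -> size w < n ->
  Pg w t n -> ~~ occurs_at t w 0.
Proof.
move=> Hs Hk /(PP w Hs) [_ Ho Hu]; apply/negP => /Hu; lia.
Qed.

Lemma BadOcc (T : eqType) (w u : seq T) c m :
  size u = m -> Pg w u m -> ~~ Pg w (behead (w ++ c :: u)) (size w + m) ->
  exists i, 0 < i <= size w /\ occurs_at (w ++ c :: u) w i.
Proof.
move=> Hs /(PP w Hs) [Hkm Ho Hu] HN.
case: (boolP [exists i : 'I_(size w).+1, (0 < val i) && occurs_at (w ++ c :: u) w i]).
  by move=> /existsP [i /andP [i0 Hi]]; exists i; split => //; rewrite i0 -ltnS ltn_ord.
move=> /existsPn Hno; exfalso; move/negP: HN; apply.
have Et : w ++ c :: u = (w ++ [:: c]) ++ u by rewrite -catA.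
have Sz : size (w ++ [:: c]) = size w + 1 by rewrite size_cat.
have Hs' : size (behead (w ++ c :: u)) = size w + m by rewrite size_behead size_cat /= Hs; lia.
have Pos : 0 < size (w ++ c :: u) by rewrite size_cat /=; lia.
apply/(PP w Hs'); split; first by lia.
- rewrite occ_beh // Et (_ : (size w + m - size w).+1 = size (w ++ [:: c]) + (m - size w)).
    by rewrite occ_cat.
  by rewrite Sz; lia.
- move=> i; rewrite occ_beh //.
  case: (ltnP i (size w)) => Hi.
    have Hlt : i.+1 < (size w).+1 by lia.
    by have := Hno (Ordinal Hlt); rewrite /= => /negbTE ->.
  rewrite Et (_ : i.+1 = size (w ++ [:: c]) + (i - size w)); last by rewrite Sz; lia.
  by rewrite occ_cat => /Hu; lia.
Qed.

Lemma bad_inj (T : eqType) (w u : seq T) c1 c2 m :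
  size u = m -> Pg w u m ->
  ~~ Pg w (behead (w ++ c1 :: u)) (size w + m) ->
  ~~ Pg w (behead (w ++ c2 :: u)) (size w + m) -> c1 = c2.
Proof.
move=> Hs Hu B1 B2.
have [i1 [Hi1 O1]] := BadOcc Hs Hu B1.
have [i2 [Hi2 O2]] := BadOcc Hs Hu B2.
case: (leqP i1 i2) => H.
  exact: (KL Hi1 Hi2 H O1 O2).
by apply/esym; apply: (KL Hi2 Hi1 (ltnW H) O2 O1).
Qed.

Lemma main_count (Omega : finType) (w : seq Omega) n' :
  0 < #|Omega| -> size w + 1 < n'.+1 ->
  hw w n'.+1 + (#|Omega| - 1) * hw w (n' - size w) <= #|Omega| * hw w n'.
Proof.
move=> Hq0 Hn.
set m := n' - size w.
have Hkm : size w + m = n' by rewrite /m; lia.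
set q := #|Omega|.
pose S (j : nat) := [set s : j.-tuple Omega | Pg w s j].
have hwS : forall j, hw w j = #|S j| by [].
pose Y := [set t : n'.+1.-tuple Omega | Pg w (behead t) n'].
pose Z := [set t : n'.+1.-tuple Omega | Pg w (behead t) n' && occurs_at t w 0].
have HY : #|Y| <= q * hw w n'.
  pose F := fun p : Omega * n'.-tuple Omega => [tuple of p.1 :: p.2].
  apply: (leq_trans (n := #|F @: setX [set: Omega] (S n')|)).
    apply: subset_leq_card; apply/subsetP => t; rewrite inE => Ht.
    apply/imsetP; exists (thead t, [tuple of behead t]).
      by rewrite in_setX !inE /=.
    by apply: val_inj; rewrite /= [in LHS](tuple_eta t).
  by apply: (leq_trans (leq_imset_card _ _)); rewrite cardsX cardsT.
have HSZ : hw w n'.+1 + #|Z| <= #|Y|.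
  rewrite hwS -(cardsID (S n'.+1) Y).
  have -> : Y :&: S n'.+1 = S n'.+1.
    apply/setIidPr; apply/subsetP => t; rewrite !inE => Ht.
    by apply: (L1 (size_tuple t)) => //; apply: leq_ltn_trans (leq_addr 1 _) Hn.
  rewrite leq_add2l; apply: subset_leq_card; apply/subsetP => t.
  rewrite !inE => /andP [H1 H2]; rewrite H1 andbT.
  by apply/negP => /(L2 (size_tuple t)) => /(_ (leq_ltn_trans (leq_addr 1 _) Hn)); rewrite H2.
have HZ : (q - 1) * hw w m <= #|Z|.
  pose A0 := [set p : Omega * m.-tuple Omega | Pg w p.2 m].
  pose D := [set p : Omega * m.-tuple Omega | Pg w (behead (w ++ p.1 :: p.2)) n'].
  have HA0 : #|A0| = q * hw w m.
    rewrite hwS; have := cardsX [set: Omega] (S m); rewrite cardsT => <-.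
    by apply: eq_card => -[c u]; rewrite !inE.
  have HB : #|A0 :\: D| <= hw w m.
    rewrite -(card_in_imset (f := snd)).
      rewrite hwS; apply: subset_leq_card; apply/subsetP => u /imsetP [p].
      by rewrite !inE => /andP [_ H] ->.
    move=> [c1 u1] [c2 u2]; rewrite !inE /= => /andP [B1 H1] /andP [B2 H2] Eu.
    rewrite -Eu in B2 H2 *.
    have := @bad_inj _ w u1 c1 c2 m (size_tuple u1) H1; rewrite Hkm => E.
    by rewrite (E B1 B2).
  have HD : #|A0 :&: D| <= #|Z|.
    pose G := fun p : Omega * m.-tuple Omega =>
      (insubd (nseq_tuple n'.+1 p.1) (w ++ p.1 :: p.2) : n'.+1.-tuple Omega).
    have GE : forall p, val (G p) = w ++ p.1 :: p.2.
      move=> p; rewrite val_insubd size_cat /= size_tuple.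
      by rewrite (_ : size w + m.+1 == n'.+1) //; apply/eqP; lia.
    rewrite -(card_in_imset (f := G)).
      apply: subset_leq_card; apply/subsetP => t /imsetP [p].
      rewrite !inE => /andP [_ H] ->.
      by rewrite GE H occ0.
    move=> [c1 u1] [c2 u2] _ _ /(congr1 val); rewrite !GE /= => /eqP.
    rewrite eqseq_cat // => /andP [_ /eqP [-> E]].
    by congr pair; apply: val_inj.
  have := cardsID D A0; rewrite HA0 => E.
  have Hq : q * hw w m = (q - 1) * hw w m + hw w m.
    by rewrite mulnBl mul1n subnK // leq_pmull.
  lia.
lia.
Qed.

Unset Implicit Arguments.
Import GRing.Theory Num.Theory.

Theorem corollary4p2 (Omega : finType) (w : seq Omega) (n : nat) :
  (2 <= #|Omega|)%N -> (size w + 1 < n)%N ->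
  (((#|Omega| - 1)%:Z * (hw w (n - size w - 1))%:Z <= Hw w n)%R).
Proof.
move=> Hq Hn.
case: n Hn => [|n'] Hn; first by [].
have := main_count (ltnW Hq) Hn.
rewrite /Hw /= (_ : n'.+1 - size w - 1 = n' - size w); last by lia.
move=> H.
rewrite -PoszM -PoszM subzn; last by lia.
rewrite lez_nat; lia.
Qed.
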